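(* Let $b>a\ge0$, $\beta\in(0,1)$, and let $0w1$ be a valid word. Then the function $x\mapsto\lambda(0w1,x)$ is differentiable on $\mathbb{R}_+$ and $$\Big|\frac{d}{dx}\lambda(0w1,x)\Big|\le\frac{1}{(1-\beta)^2}\qquad\text{for all }x\ge0 .$$
   Context: Words are strings over $\{0,1\}$, $w_{1:n}=w_1\cdots w_n$ (with $w_{1:0}$ the empty word), $w^\omega$ the infinite repetition, $|w|$ the length. $\phi_0(x)=\frac{x+1}{ax+a+1}$, $\phi_1(x)=\frac{x+1}{bx+b+1}$ on $\mathbb{R}_+=[0,\infty)$, $\phi_w=\phi_{w_{|w|}}\circ\cdots\circ\phi_{w_1}$ (first letter applied first), $\phi_{\text{empty}}=\mathrm{id}$. For a possibly infinite word $u$, $S(u,x):=\sum_{n=0}^{|u|-1}\beta^n\phi_{u_{1:n}}(x)$, and $$\lambda(0w1,x):=\frac{1-\beta^{|0w1|}}{1-\beta}\Big(S\big((01w)^\omega,x\big)-S\big((10w)^\omega,x\big)\Big).$$ For $p\ge1$, $L_p,R_p$ are the word morphisms determined by $L_p(0)=0^{p+1}1$, $L_p(1)=0^p1$, $R_p(0)=01^p$, $R_p(1)=01^{p+1}$; the valid words form the smallest set of words containing $0,1$ and closed under all $L_p,R_p$. *)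

(* Defs.v *)
From Stdlib Require Import Reals Lra List Classical ClassicalEpsilon.
Import ListNotations.
Open Scope R_scope.

(* Letters: 0 = false, 1 = true.  Words = list bool. *)

Definition phi (a b : R) (c : bool) (x : R) : R :=
  if c then (x + 1) / (b * x + b + 1) else (x + 1) / (a * x + a + 1).

(* phi_w = phi_{w_|w|} o ... o phi_{w_1}: first letter applied first. *)
Definition phi_word (a b : R) (w : list bool) (x : R) : R :=
  fold_left (fun y c => phi a b c y) w x.

(* Infinite words are functions nat -> bool (u_1 is u 0). *)
Definition prefix (u : nat -> bool) (n : nat) : list bool := map u (seq 0 n).

(* u^omega for a nonempty finite word u *)
Definition omega (v : list bool) : nat -> bool :=
  fun n => nth (n mod length v) v false.

(* Limit of a real sequence (chosen by classical choice; meaningful when it exists). *)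
Definition Rlim (s : nat -> R) : R :=
  epsilon (inhabits 0) (fun l => Un_cv s l).

Definition S_inf (a b beta : R) (u : nat -> bool) (x : R) : R :=
  Rlim (fun N => sum_f_R0 (fun n => beta ^ n * phi_word a b (prefix u n) x) N).

(* lambda(0w1,x) *)
Definition lambda (a b beta : R) (w : list bool) (x : R) : R :=
  (1 - beta ^ (length w + 2)) / (1 - beta) *
  (S_inf a b beta (omega ([false; true] ++ w)) x
   - S_inf a b beta (omega ([true; false] ++ w)) x).

Definition Lsub (p : nat) (c : bool) : list bool :=
  if c then repeat false p ++ [true] else repeat false (S p) ++ [true].
Definition Rsub (p : nat) (c : bool) : list bool :=
  if c then false :: repeat true (S p) else false :: repeat true p.
Definition Lmorph (p : nat) (w : list bool) : list bool := flat_map (Lsub p) w.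
Definition Rmorph (p : nat) (w : list bool) : list bool := flat_map (Rsub p) w.

Inductive valid : list bool -> Prop :=
| valid0 : valid [false]
| valid1 : valid [true]
| validL : forall p w, (1 <= p)%nat -> valid w -> valid (Lmorph p w)
| validR : forall p w, (1 <= p)%nat -> valid w -> valid (Rmorph p w).

(* Main.v *)
Require Import Defs.
From Stdlib Require Import Reals List Lra Lia ClassicalEpsilon.
From Coquelicot Require Import Coquelicot.
Import ListNotations.
Open Scope R_scope.

Definition g (c y : R) := (y + 1) / (c * y + c + 1).
Definition cf (a b : R) (cc : bool) := if cc then b else a.
Lemma phi_g a b cc y : phi a b cc y = g (cf a b cc) y.
Proof. destruct cc; reflexivity. Qed.

Lemma g_nonneg c y : 0 <= c -> 0 <= y -> 0 <= g c y.
Proof. intros. unfold g. apply Rdiv_le_0_compat; nra. Qed.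

Lemma g_le c y : 0 <= c -> 0 <= y -> g c y <= y + 1.
Proof. intros. unfold g. apply Rle_div_l; nra. Qed.

Lemma g_mono c x y : 0 <= c -> 0 <= x <= y -> 0 <= g c y - g c x <= y - x.
Proof.
  intros Hc [Hx Hxy]. unfold g.
  assert (E : (y + 1) / (c * y + c + 1) - (x + 1) / (c * x + c + 1)
     = (y - x) / ((c * y + c + 1) * (c * x + c + 1))) by (field; nra).
  rewrite E.
  assert (D1 : 1 <= c * y + c + 1) by nra.
  assert (D2 : 1 <= c * x + c + 1) by nra.
  assert (D3 : 1 <= (c * y + c + 1) * (c * x + c + 1)) by nra.
  split.
  - apply Rdiv_le_0_compat; lra.
  - apply Rle_div_l; nra.
Qed.

Lemma g_deriv c y : 0 <= c -> 0 <= y ->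
  derivable_pt_lim (g c) y (/ (c * y + c + 1) ^ 2).
Proof.
  intros Hc Hy. apply is_derive_Reals. unfold g.
  auto_derive. nra. field. nra.
Qed.

Section Words.
Variables a b : R.
Hypothesis Ha : 0 <= a.
Hypothesis Hb : 0 <= b.

Lemma cf_nonneg cc : 0 <= cf a b cc.
Proof. destruct cc; simpl; assumption. Qed.

Lemma phi_word_cons cc l y : phi_word a b (cc :: l) y = phi_word a b l (phi a b cc y).
Proof. reflexivity. Qed.

Lemma pw_nonneg l : forall y, 0 <= y -> 0 <= phi_word a b l y.
Proof.
  induction l as [|cc l IH]; intros y Hy; [exact Hy|].
  rewrite phi_word_cons. apply IH. rewrite phi_g. apply g_nonneg; auto using cf_nonneg.
Qed.

Lemma pw_le l : forall y, 0 <= y -> phi_word a b l y <= y + INR (length l).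
Proof.
  induction l as [|cc l IH]; intros y Hy; [simpl; lra|].
  rewrite phi_word_cons.
  assert (H0 : 0 <= phi a b cc y) by (rewrite phi_g; apply g_nonneg; auto using cf_nonneg).
  assert (H1 : phi a b cc y <= y + 1) by (rewrite phi_g; apply g_le; auto using cf_nonneg).
  specialize (IH _ H0). simpl length. rewrite S_INR. lra.
Qed.

Lemma pw_mono l : forall x y, 0 <= x <= y ->
  0 <= phi_word a b l y - phi_word a b l x <= y - x.
Proof.
  induction l as [|cc l IH]; intros x y Hxy; [simpl; lra|].
  rewrite !phi_word_cons.
  assert (H := g_mono (cf a b cc) x y (cf_nonneg cc) Hxy).
  rewrite <- !phi_g in H.
  assert (H0 : 0 <= phi a b cc x) by (rewrite phi_g; apply g_nonneg; auto using cf_nonneg; lra).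
  specialize (IH (phi a b cc x) (phi a b cc y) ltac:(lra)). lra.
Qed.

Lemma pw_quot l x y : 0 <= x -> 0 <= y -> y <> x ->
  0 <= (phi_word a b l y - phi_word a b l x) / (y - x) <= 1.
Proof.
  intros Hx Hy Hne. destruct (Rle_lt_dec x y) as [H|H].
  - assert (Hlt : 0 < y - x) by (destruct H; [lra| subst; congruence]).
    pose proof (pw_mono l x y ltac:(lra)).
    split; [apply Rdiv_le_0_compat; lra| apply Rle_div_l; lra].
  - pose proof (pw_mono l y x ltac:(lra)).
    replace ((phi_word a b l y - phi_word a b l x) / (y - x)) with
      ((phi_word a b l x - phi_word a b l y) / (x - y)) by (field; lra).
    split; [apply Rdiv_le_0_compat; lra| apply Rle_div_l; lra].
Qed.

Fixpoint dw (l : list bool) (y : R) : R :=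
  match l with
  | [] => 1
  | cc :: l' => dw l' (phi a b cc y) * / (cf a b cc * y + cf a b cc + 1) ^ 2
  end.

Lemma dw_spec l : forall y, 0 <= y ->
  derivable_pt_lim (phi_word a b l) y (dw l y) /\ 0 <= dw l y <= 1.
Proof.
  induction l as [|cc l IH]; intros y Hy.
  - simpl. split; [|lra].
    change (derivable_pt_lim id y 1). apply derivable_pt_lim_id.
  - assert (H0 : 0 <= phi a b cc y) by (rewrite phi_g; apply g_nonneg; auto using cf_nonneg).
    destruct (IH _ H0) as [HD HB].
    replace (dw (cc :: l) y) with (dw l (phi a b cc y) * / (cf a b cc * y + cf a b cc + 1) ^ 2) by reflexivity.
    pose proof (cf_nonneg cc) as Hc.
    assert (D1 : 1 <= cf a b cc * y + cf a b cc + 1) by nra.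
    assert (P : 0 < / (cf a b cc * y + cf a b cc + 1) ^ 2 <= 1).
    { split. apply Rinv_0_lt_compat. nra.
      rewrite <- Rinv_1. apply Rinv_le_contravar; nra. }
    split.
    2:{ set (t := / (cf a b cc * y + cf a b cc + 1) ^ 2) in *.
        destruct P as [P1 P2]; destruct HB as [B1 B2].
        split; [apply Rmult_le_pos; lra|].
        apply Rle_trans with (1 * 1); [apply Rmult_le_compat; lra|lra]. }
    change (derivable_pt_lim (comp (phi_word a b l) (phi a b cc)) y
      (dw l (phi a b cc y) * / (cf a b cc * y + cf a b cc + 1) ^ 2)).
    apply derivable_pt_lim_comp; [|exact HD].
    assert (E : phi a b cc = g (cf a b cc)) by (destruct cc; reflexivity).
    rewrite E. apply g_deriv; auto.
Qed.

End Words.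

Lemma npow_aux (r : R) : 0 < r < 1 -> forall n, r ^ n * (r + INR n * (1 - r)) <= r.
Proof.
  intros Hr. induction n as [|n IH].
  - simpl. lra.
  - rewrite S_INR. simpl pow.
    assert (Hp : 0 <= r ^ n) by (apply pow_le; lra).
    assert (Hn : 0 <= INR n) by apply pos_INR.
    assert (r ^ n * (r * (r + (INR n + 1) * (1 - r))) <= r ^ n * (r + INR n * (1 - r))).
    { apply Rmult_le_compat_l; [lra|].
      assert (0 <= INR n * ((1 - r) * (1 - r))) by (apply Rmult_le_pos; nra). nra. }
    lra.
Qed.

Lemma npow_bound (r : R) : 0 < r < 1 -> forall n, INR n * r ^ n <= r / (1 - r).
Proof.
  intros Hr n. pose proof (npow_aux r Hr n).
  assert (Hp : 0 <= r ^ n) by (apply pow_le; lra).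
  apply (proj1 (Rle_div_r _ _ (1 - r) ltac:(lra))).
  assert (0 <= r ^ n * r) by (apply Rmult_le_pos; lra).
  replace (INR n * r ^ n * (1 - r)) with (r ^ n * (r + INR n * (1 - r)) - r ^ n * r) by ring.
  lra.
Qed.

Lemma ex_series_geom_scal (K q : R) : 0 <= q < 1 -> ex_series (fun n => K * q ^ n).
Proof.
  intros Hq. apply (ex_series_scal_l K (fun n => q ^ n)).
  apply ex_series_geom. rewrite Rabs_pos_eq; lra.
Qed.

Lemma ex_series_growth (beta y : R) (F : nat -> R) : 0 < beta < 1 -> 0 <= y ->
  (forall n, 0 <= F n <= y + INR n) -> ex_series (fun n => beta ^ n * F n).
Proof.
  intros Hb Hy HF.
  set (gm := (1 + beta) / 2). set (r := beta / gm).
  assert (Hgm : 0 < gm < 1) by (unfold gm; lra).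
  assert (Hr : 0 < r < 1).
  { unfold r. split. apply Rdiv_lt_0_compat; lra. apply (Rmult_lt_reg_r gm); [lra|].
    unfold Rdiv. rewrite Rmult_assoc, Rinv_l by lra. unfold gm; lra. }
  apply (@ex_series_le R_AbsRing R_CompleteNormedModule _ (fun n => y * beta ^ n + (r / (1 - r)) * gm ^ n)).
  - intros n. change (norm (beta ^ n * F n)) with (Rabs (beta ^ n * F n)).
    specialize (HF n).
    assert (Hp : 0 <= beta ^ n) by (apply pow_le; lra).
    rewrite Rabs_pos_eq by nra.
    assert (E : beta ^ n = r ^ n * gm ^ n).
    { rewrite <- Rpow_mult_distr. unfold r. f_equal. field. lra. }
    pose proof (npow_bound r Hr n).
    assert (Hg : 0 <= gm ^ n) by (apply pow_le; lra).
    assert (beta ^ n * INR n <= r / (1 - r) * gm ^ n).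
    { rewrite E. replace (r ^ n * gm ^ n * INR n) with ((INR n * r ^ n) * gm ^ n) by ring.
      apply Rmult_le_compat_r; lra. }
    nra.
  - apply (ex_series_plus (fun n => y * beta ^ n) (fun n => r / (1 - r) * gm ^ n));
    apply ex_series_geom_scal; lra.
Qed.

Lemma Rlim_series (s : nat -> R) : ex_series s ->
  Rlim (fun N => sum_f_R0 s N) = Series s.
Proof.
  intros Hs. pose proof (Series_correct _ Hs) as H.
  apply is_series_Reals in H.
  assert (Hu : Un_cv (fun N => sum_f_R0 s N) (Series s)) by exact H.
  unfold Rlim.
  apply (UL_sequence (fun N => sum_f_R0 s N)); [|exact Hu].
  apply (epsilon_spec (inhabits 0) (fun l => Un_cv (fun N => sum_f_R0 s N) l)).
  exists (Series s). exact Hu.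
Qed.

Lemma tail_bound (beta : R) (t : nat -> R) : 0 < beta < 1 ->
  (forall n, Rabs (t n) <= 1) ->
  ex_series (fun n => beta ^ n * t n) /\
  forall N, Rabs (Series (fun k => beta ^ (N + k) * t (N + k)%nat)) <= beta ^ N / (1 - beta).
Proof.
  intros Hb Ht.
  assert (Hle : forall N k, Rabs (beta ^ (N + k) * t (N + k)%nat) <= beta ^ N * beta ^ k).
  { intros N k. rewrite Rabs_mult, Rabs_pos_eq by (apply pow_le; lra).
    rewrite <- pow_add. specialize (Ht (N+k)%nat).
    assert (0 <= beta ^ (N + k)) by (apply pow_le; lra). nra. }
  split.
  - apply (@ex_series_le R_AbsRing R_CompleteNormedModule _ (fun n => 1 * beta ^ n)).
    + intros n. change (norm (beta ^ n * t n)) with (Rabs (beta ^ n * t n)).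
      specialize (Hle O n). simpl in Hle. lra.
    + apply ex_series_geom_scal; lra.
  - intros N.
    assert (Hg : ex_series (fun k => beta ^ N * beta ^ k)) by (apply ex_series_geom_scal; lra).
    eapply Rle_trans. apply Series_Rabs.
    + apply (@ex_series_le R_AbsRing R_CompleteNormedModule _ (fun k => beta ^ N * beta ^ k)); [|exact Hg].
      intros k. change (norm (Rabs (beta ^ (N + k) * t (N + k)%nat))) with
         (Rabs (Rabs (beta ^ (N + k) * t (N + k)%nat))). rewrite Rabs_Rabsolu. apply Hle.
    + eapply Rle_trans. apply Series_le; [|exact Hg].
      intros k. split; [apply Rabs_pos| apply Hle].
      rewrite Series_scal_l.
      replace (Series (pow beta)) with (/ (1 - beta)).
      2:{ symmetry. apply is_series_unique. apply is_series_geom. rewrite Rabs_pos_eq; lra. }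
      unfold Rdiv. lra.
Qed.

Lemma finite_lim (gg : nat -> R -> R) (e : nat -> R) (D : R -> Prop) (x beta : R) :
  (forall n, limit1_in (gg n) D (e n) x) -> forall N,
  limit1_in (fun y => sum_f_R0 (fun n => beta ^ n * gg n y) N) D
            (sum_f_R0 (fun n => beta ^ n * e n) N) x.
Proof.
  intros H N. induction N as [|N IH].
  - simpl. apply (limit_mul (fun _ => 1) (gg 0%nat)); [|apply H].
    apply (limit_free (fun _ => 1) D 0 x).
  - simpl. apply (limit_plus _ (fun y => beta ^ S N * gg (S N) y)); [exact IH|].
    apply (limit_mul (fun _ => beta ^ S N) (gg (S N))); [|apply H].
    apply (limit_free (fun _ => beta ^ S N) D 0 x).
Qed.

Lemma dom_lim (gg : nat -> R -> R) (e : nat -> R) (D : R -> Prop) (x beta : R) :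
  0 < beta < 1 ->
  (forall n y, D y -> Rabs (gg n y) <= 1) -> (forall n, Rabs (e n) <= 1) ->
  (forall n, limit1_in (gg n) D (e n) x) ->
  limit1_in (fun y => Series (fun n => beta ^ n * gg n y)) D
            (Series (fun n => beta ^ n * e n)) x.
Proof.
  intros Hb Hg He Hl eps Heps.
  destruct (pow_lt_1_zero beta ltac:(rewrite Rabs_pos_eq; lra) (eps * (1 - beta) / 4))
    as [N0 HN0]. { apply Rmult_lt_0_compat; [nra|lra]. }
  specialize (HN0 (S N0) ltac:(lia)).
  rewrite Rabs_pos_eq in HN0 by (apply pow_le; lra).
  assert (HT : beta ^ S N0 / (1 - beta) < eps / 4).
  { apply (proj2 (Rlt_div_l _ _ (1 - beta) ltac:(lra))). lra. }
  destruct (finite_lim gg e D x beta Hl N0 (eps / 2) ltac:(lra)) as [alp [Halp Hf]].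
  exists alp. split; [exact Halp|].
  intros y [Dy Hy]. specialize (Hf y (conj Dy Hy)).
  simpl in Hf |- *. unfold R_dist in Hf |- *.
  destruct (tail_bound beta (fun n => gg n y) Hb (fun n => Hg n y Dy)) as [Exg Tg].
  destruct (tail_bound beta e Hb He) as [Exe Te].
  specialize (Tg (S N0)). specialize (Te (S N0)).
  rewrite (Series_incr_n _ (S N0) ltac:(lia) Exg).
  rewrite (Series_incr_n _ (S N0) ltac:(lia) Exe).
  simpl pred.
  set (A1 := sum_f_R0 (fun n => beta ^ n * gg n y) N0) in *.
  set (A2 := sum_f_R0 (fun n => beta ^ n * e n) N0) in *.
  set (T1 := Series (fun k => beta ^ (S N0 + k) * gg (S N0 + k)%nat y)) in *.
  set (T2 := Series (fun k => beta ^ (S N0 + k) * e (S N0 + k)%nat)) in *.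
  assert (Rabs (A1 + T1 - (A2 + T2)) <= Rabs (A1 - A2) + Rabs T1 + Rabs T2).
  { replace (A1 + T1 - (A2 + T2)) with ((A1 - A2) + (T1 - T2)) by ring.
    eapply Rle_trans; [apply Rabs_triang|].
    unfold Rminus at 2. pose proof (Rabs_triang T1 (- T2)). rewrite Rabs_Ropp in H. lra. }
  lra.
Qed.

Lemma quot_lim (f : R -> R) (x l : R) : derivable_pt_lim f x l ->
  limit1_in (fun y => (f y - f x) / (y - x)) (fun y => y <> x /\ 0 <= y) l x.
Proof.
  intros H eps Heps. destruct (H eps Heps) as [delta Hd].
  exists delta. split; [apply cond_pos|].
  intros y [[Hne _] Hy]. change R in y. simpl in Hy |- *. unfold R_dist in Hy |- *.
  assert (Hh : y - x <> 0) by lra.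
  specialize (Hd (y - x) Hh Hy). replace (x + (y - x)) with y in Hd by ring. exact Hd.
Qed.

Lemma limit1_in_ext (f g : R -> R) (D : R -> Prop) (l x : R) :
  (forall y, D y -> f y = g y) -> limit1_in g D l x -> limit1_in f D l x.
Proof.
  intros E H eps Heps. destruct (H eps Heps) as [alp [Ha Hf]].
  exists alp. split; [exact Ha|]. intros y [Dy Hy]. rewrite E by exact Dy. apply Hf; auto.
Qed.

Lemma length_prefix u n : length (prefix u n) = n.
Proof. unfold prefix. rewrite length_map, length_seq. reflexivity. Qed.

Lemma ex_series_pw a b beta u y : 0 <= a -> 0 <= b -> 0 < beta < 1 -> 0 <= y ->
  ex_series (fun n => beta ^ n * phi_word a b (prefix u n) y).
Proof.
  intros Ha Hb Hbeta Hy. apply (ex_series_growth beta y); auto.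
  intros n. split. apply pw_nonneg; auto.
  pose proof (pw_le a b Ha Hb (prefix u n) y Hy) as H. rewrite length_prefix in H. exact H.
Qed.

Lemma S_inf_eq a b beta u y : 0 <= a -> 0 <= b -> 0 < beta < 1 -> 0 <= y ->
  S_inf a b beta u y = Series (fun n => beta ^ n * phi_word a b (prefix u n) y).
Proof. intros. unfold S_inf. apply Rlim_series. apply ex_series_pw; auto. Qed.

Theorem mainTheorem14 (a b beta : R) (w : list bool) :
  0 <= a -> a < b -> 0 < beta < 1 ->
  valid ([false] ++ w ++ [true]) ->
  forall x : R, 0 <= x ->
  exists l : R,
    limit1_in (fun y => (lambda a b beta w y - lambda a b beta w x) / (y - x))
              (fun y => y <> x /\ 0 <= y) l x
    /\ Rabs l <= 1 / (1 - beta) ^ 2.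
Proof.
  intros Ha Hab Hbeta _ x Hx.
  assert (Hb : 0 <= b) by lra.
  set (U := omega ([false; true] ++ w)). set (V := omega ([true; false] ++ w)).
  set (C := (1 - beta ^ (length w + 2)) / (1 - beta)).
  set (fU := fun n y => phi_word a b (prefix U n) y).
  set (fV := fun n y => phi_word a b (prefix V n) y).
  set (G := fun n y => (fU n y - fU n x) / (y - x) - (fV n y - fV n x) / (y - x)).
  set (e := fun n => dw a b (prefix U n) x - dw a b (prefix V n) x).
  set (D := fun y => y <> x /\ 0 <= y).
  assert (HG : forall n y, D y -> Rabs (G n y) <= 1).
  { intros n y [Hne Hy]. unfold G, fU, fV.
    pose proof (pw_quot a b Ha Hb (prefix U n) x y Hx Hy Hne).
    pose proof (pw_quot a b Ha Hb (prefix V n) x y Hx Hy Hne).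
    apply Rabs_le. lra. }
  assert (He : forall n, Rabs (e n) <= 1).
  { intros n. unfold e.
    destruct (dw_spec a b Ha Hb (prefix U n) x Hx) as [_ H1].
    destruct (dw_spec a b Ha Hb (prefix V n) x Hx) as [_ H2].
    apply Rabs_le. lra. }
  assert (Hl : forall n, limit1_in (G n) D (e n) x).
  { intros n. unfold G, e, D.
    apply (limit_minus (fun y => (fU n y - fU n x) / (y - x))
                       (fun y => (fV n y - fV n x) / (y - x))).
    - apply (quot_lim (fU n)). apply dw_spec; auto.
    - apply (quot_lim (fV n)). apply dw_spec; auto. }
  exists (C * Series (fun n => beta ^ n * e n)). split.
  - apply (limit1_in_ext _ (fun y => C * Series (fun n => beta ^ n * G n y))).
    + intros y [Hne Hy].
      assert (Hyx : y - x <> 0) by lra.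
      unfold lambda. fold U V. fold C.
      rewrite !(S_inf_eq a b beta U), !(S_inf_eq a b beta V) by auto.
      pose proof (ex_series_pw a b beta U y Ha Hb Hbeta Hy) as E1.
      pose proof (ex_series_pw a b beta U x Ha Hb Hbeta Hx) as E2.
      pose proof (ex_series_pw a b beta V y Ha Hb Hbeta Hy) as E3.
      pose proof (ex_series_pw a b beta V x Ha Hb Hbeta Hx) as E4.
      assert (EQ : Series (fun n => beta ^ n * G n y) =
        (Series (fun n => beta ^ n * phi_word a b (prefix U n) y)
         - Series (fun n => beta ^ n * phi_word a b (prefix U n) x)
         - (Series (fun n => beta ^ n * phi_word a b (prefix V n) y)
            - Series (fun n => beta ^ n * phi_word a b (prefix V n) x))) / (y - x)).
      { transitivity (Series (fun n => (((beta ^ n * phi_word a b (prefix U n) y)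
              - (beta ^ n * phi_word a b (prefix U n) x))
              - ((beta ^ n * phi_word a b (prefix V n) y)
              - (beta ^ n * phi_word a b (prefix V n) x))) * / (y - x))).
        { apply Series_ext. intros n. unfold G, fU, fV. field. exact Hyx. }
        rewrite Series_scal_r.
        rewrite Series_minus.
        2:{ exact (ex_series_minus _ _ E1 E2). }
        2:{ exact (ex_series_minus _ _ E3 E4). }
        rewrite !Series_minus by assumption. reflexivity. }
      rewrite EQ. field. exact Hyx.
    + apply (limit_mul (fun _ => C)). apply (limit_free (fun _ => C) D 0 x).
      apply dom_lim; auto.
  - destruct (tail_bound beta e Hbeta He) as [_ T]. specialize (T O).
    simpl in T.
    assert (Hk : 0 < beta ^ (length w + 2) < 1).
    { split. apply pow_lt; lra. apply pow_lt_1_compat; [lra|lia]. }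
    assert (HC : 0 <= C <= 1 / (1 - beta)).
    { unfold C. split. apply Rdiv_le_0_compat; lra.
      unfold Rdiv. apply Rmult_le_compat_r. left; apply Rinv_0_lt_compat; lra. lra. }
    rewrite Rabs_mult, (Rabs_pos_eq C) by lra.
    replace (1 / (1 - beta) ^ 2) with ((1 / (1 - beta)) * (1 / (1 - beta))) by (field; lra).
    apply Rmult_le_compat; try lra. apply Rabs_pos.
Qed.
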